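(* For every $p\in(0,1)$ and every $a>a_*=p^p(1-p)^{1-p}$, $\Upsilon_p(a)<0$, where $$\Upsilon_p(a)=\int_\beta^\alpha\frac{\eta_{p,a}(\kappa)}{\sqrt{Q_{p,a}(\kappa)}}\,d\kappa,$$ $$\eta_{p,a}(\kappa)=-(p+1)a\kappa^{1-p}-(2-p)a\kappa^{-1-p}+(1-p)^2(2p+1)\kappa^{p+1}+2(4p^2-4p+1)\kappa^{p-1}+p^2(3-2p)\kappa^{p-3},$$ $Q_{p,a}(\kappa)=a\kappa^{2(1-p)}-(1-p)^2\kappa^2-p^2$, and $\beta<\alpha$ are the two positive zeros of $Q_{p,a}$.
   Context: For $p\in(0,1)$ and $a>a_*$, $Q_{p,a}$ has exactly two positive zeros $\beta<\alpha$ and is positive between them; the integral is a convergent improper integral. (Geometrically, $\Upsilon_p(a)$ is the second variation of $\mathbf{\Theta}_p$ in the direction $\phi\equiv1$ along a half-period of the curvature of the $p$-elastic curve $\gamma_a$.) *)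

(* Defs.v *)
From Stdlib Require Import Reals.
From Coquelicot Require Import Coquelicot.
Open Scope R_scope.

Definition a_star (p : R) : R := Rpower p p * Rpower (1 - p) (1 - p).

Definition Q (p a k : R) : R :=
  a * Rpower k (2 * (1 - p)) - (1 - p) ^ 2 * k ^ 2 - p ^ 2.

Definition eta (p a k : R) : R :=
  - (p + 1) * a * Rpower k (1 - p)
  - (2 - p) * a * Rpower k (- 1 - p)
  + (1 - p) ^ 2 * (2 * p + 1) * Rpower k (p + 1)
  + 2 * (4 * p ^ 2 - 4 * p + 1) * Rpower k (p - 1)
  + p ^ 2 * (3 - 2 * p) * Rpower k (p - 3).

Definition Upsilon_integrand (p a k : R) : R := eta p a k / sqrt (Q p a k).

(* Main.v *)
Require Import Defs.
From Stdlib Require Import Reals Lra Psatz.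
From Coquelicot Require Import Coquelicot.
Open Scope R_scope.

Lemma rpz (k p u e : R) (m n : Z) : 0 < k -> u = Rpower k p -> e = IZR m * p + IZR n ->
  Rpower k e = powerRZ u m * powerRZ k n.
Proof.
  intros Hk -> ->. rewrite Rpower_plus, (powerRZ_Rpower k n Hk).
  rewrite (powerRZ_Rpower (Rpower k p) m (exp_pos _)). rewrite Rpower_mult. f_equal. f_equal. ring.
Qed.

Lemma exp_rp (x e : R) : exp (e * ln x) = Rpower x e.
Proof. reflexivity. Qed.

Ltac try_mn k p u e Hk Hu :=
  first [
rewrite (rpz k p u e 1 0 Hk Hu) by ring
  | rewrite (rpz k p u e 2 0 Hk Hu) by ring
  | rewrite (rpz k p u e (-1) 0 Hk Hu) by ring
  | rewrite (rpz k p u e (-2) 0 Hk Hu) by ring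
  | rewrite (rpz k p u e 0 1 Hk Hu) by ring
  | rewrite (rpz k p u e 0 (-1) Hk Hu) by ring
  | rewrite (rpz k p u e 0 2 Hk Hu) by ring
  | rewrite (rpz k p u e 1 1 Hk Hu) by ring
  | rewrite (rpz k p u e 1 (-1) Hk Hu) by ring
  | rewrite (rpz k p u e 1 (-2) Hk Hu) by ring
  | rewrite (rpz k p u e 1 (-3) Hk Hu) by ring
  | rewrite (rpz k p u e 1 (-4) Hk Hu) by ring
  | rewrite (rpz k p u e (-1) 1 Hk Hu) by ring
  | rewrite (rpz k p u e (-1) (-1) Hk Hu) by ring
  | rewrite (rpz k p u e (-1) 2 Hk Hu) by ring
  | rewrite (rpz k p u e (-2) 1 Hk Hu) by ring
  | rewrite (rpz k p u e (-2) 2 Hk Hu) by ring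
  | rewrite (rpz k p u e (-2) 3 Hk Hu) by ring
  | rewrite (rpz k p u e 2 (-1) Hk Hu) by ring
  | rewrite (rpz k p u e 2 (-2) Hk Hu) by ring
  | rewrite (rpz k p u e 2 (-3) Hk Hu) by ring
  | rewrite (rpz k p u e (-2) 0 Hk Hu) by ring ].

Ltac rpnorm k p Hk :=
  rewrite ?exp_rp;
  let u := fresh "u" in let Hu := fresh "Hu" in
  remember (Rpower k p) as u eqn:Hu;
  let Hu0 := fresh "Hu0" in assert (Hu0 : 0 < u) by (rewrite Hu; apply exp_pos);
  repeat match goal with
  | |- context [Rpower k ?e] => try_mn k p u e Hk Hu
  end;
  simpl powerRZ.

Definition Gf (p k : R) := -(p+1)/2 * Rpower k p + (2-p)/2 * Rpower k (p-2).
Definition Hf (p a k : R) := Gf p k * sqrt (Q p a k).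
Definition Rr (p k : R) := - p^2*(1-p)^2 * Rpower k (p+1)
   - p*(1+p-4*p^2+2*p^3) * Rpower k (p-1) - p^2*(1-p)^2 * Rpower k (p-3).
Definition hh (p a k : R) := Rr p k / sqrt (Q p a k).
Definition Qd (p a k : R) := 2*(1-p)*k*(a / Rpower k (2*p) - (1-p)).


Ltac fld := field; repeat split; try lra.

Definition Gd (p k : R) := -(p+1)/2 * p * Rpower k (p-1) + (2-p)/2*(p-2)*Rpower k (p-3).

Lemma Q_der p a k : 0 < k -> is_derive (Q p a) k (Qd p a k).
Proof.
  intros Hk. unfold Q, Qd, Rpower. auto_derive. lra.
  rpnorm k p Hk. fld.
Qed.

Lemma G_der p k : 0 < k -> is_derive (Gf p) k (Gd p k).
Proof.
  intros Hk. unfold Gf, Gd, Rpower. auto_derive. repeat split; lra.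
  rpnorm k p Hk. fld.
Qed.

Lemma key_id p a k : 0 < k ->
  eta p a k = 2 * Gd p k * Q p a k + Gf p k * Qd p a k + Rr p k.
Proof.
  intros Hk. unfold eta, Gd, Q, Gf, Qd, Rr.
  rpnorm k p Hk. fld.
Qed.

Lemma H_der p a k : 0 < k -> 0 < Q p a k ->
  is_derive (Hf p a) k ((Upsilon_integrand p a k - hh p a k)/2).
Proof.
  intros Hk HQ.
  assert (D := is_derive_mult _ _ k _ _ (G_der p k Hk)
     (is_derive_sqrt _ _ _ (Q_der p a k Hk) HQ) Rmult_comm).
  assert (E : (Upsilon_integrand p a k - hh p a k)/2 =
     plus (mult (Gd p k) (sqrt (Q p a k))) (mult (Gf p k) (Qd p a k / (2*sqrt(Q p a k))))).
  { unfold Upsilon_integrand, hh, plus, mult; simpl. rewrite key_id by exact Hk.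
    assert (Hs := sqrt_lt_R0 _ HQ). assert (Hss := sqrt_sqrt _ (Rlt_le _ _ HQ)).
    set (s := sqrt (Q p a k)) in *. rewrite <- Hss. field. lra. }
  rewrite E. exact D.
Qed.

Definition V (p a k : R) := a - (1-p)^2 * Rpower k (2*p) - p^2 * Rpower k (2*p-2).
Definition Vd (p k : R) := 2*p*(1-p)*Rpower k (2*p-3) * (p - (1-p)*k^2).

Lemma Q_V p a k : 0 < k -> Q p a k = Rpower k (2*(1-p)) * V p a k.
Proof. intros Hk. unfold Q, V. rpnorm k p Hk. fld. Qed.

Lemma V_der p a k : 0 < k -> is_derive (V p a) k (Vd p k).
Proof. intros Hk. unfold V, Vd, Rpower. auto_derive. repeat split; lra.
  rpnorm k p Hk. fld. Qed.

Lemma a_star_eq p : 0 < p < 1 -> (1-p) * Rpower (p/(1-p)) p = a_star p.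
Proof.
  intros Hp. unfold a_star, Rpower. rewrite ln_div by lra.
  replace (p*(ln p - ln(1-p))) with (p*ln p + (-p * ln(1-p))) by ring.
  replace ((1-p)*ln(1-p)) with (ln(1-p) + (-p*ln(1-p))) by ring.
  rewrite !exp_plus, exp_ln by lra. ring.
Qed.

Definition k0 (p : R) := sqrt (p/(1-p)).

Lemma k0_pos p : 0 < p < 1 -> 0 < k0 p.
Proof. intros. unfold k0. apply sqrt_lt_R0. apply Rdiv_lt_0_compat; lra. Qed.

Lemma k0_sq p : 0 < p < 1 -> k0 p ^ 2 = p/(1-p).
Proof. intros. unfold k0. simpl. rewrite Rmult_1_r. apply sqrt_sqrt.
  apply Rlt_le, Rdiv_lt_0_compat; lra. Qed.

Lemma V_k0 p a : 0 < p < 1 -> V p a (k0 p) = a - a_star p.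
Proof.
  intros Hp. rewrite <- a_star_eq by exact Hp.
  assert (Hk := k0_pos p Hp). assert (Hs := k0_sq p Hp).
  assert (E : Rpower (k0 p) (2*p) = Rpower (p/(1-p)) p).
  { rewrite <- Hs, <- Rpower_mult. f_equal. replace 2 with (INR 2) by (simpl; ring).
    rewrite Rpower_pow by exact Hk. reflexivity. }
  assert (E2 : Rpower (k0 p) (2*p-2) = Rpower (k0 p) (2*p) / (k0 p)^2).
  { unfold Rminus. rewrite Rpower_plus. replace (Ropp 2) with (- INR 2) by (simpl; ring).
    rewrite Rpower_Ropp, Rpower_pow by exact Hk. field. lra. }
  unfold V. rewrite E2, E, Hs. field. lra.
Qed.

Lemma V_cont p a k : 0 < k -> continuity_pt (V p a) k.
Proof. intros Hk. apply continuity_pt_filterlim. apply (ex_derive_continuous (V p a)).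
  eexists. apply V_der, Hk. Qed.

Lemma Vd_pos p c : 0 < p < 1 -> 0 < c -> c < k0 p -> 0 < Vd p c.
Proof.
  intros Hp Hc Hck. assert (Hs := k0_sq p Hp). assert (Hk0 := k0_pos p Hp).
  assert (c^2 < p/(1-p)) by (rewrite <- Hs; nra).
  assert (p - (1-p)*c^2 > 0).
  { apply (Rmult_lt_compat_l (1-p)) in H; [|lra].
    replace ((1-p)*(p/(1-p))) with p in H by (field; lra). lra. }
  unfold Vd. assert (0 < Rpower c (2*p-3)) by apply exp_pos.
  apply Rmult_lt_0_compat; [|lra]. apply Rmult_lt_0_compat; [|lra]. nra.
Qed.

Lemma Vd_neg p c : 0 < p < 1 -> 0 < c -> k0 p < c -> Vd p c < 0.
Proof.
  intros Hp Hc Hck. assert (Hs := k0_sq p Hp). assert (Hk0 := k0_pos p Hp).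
  assert (c^2 > p/(1-p)) by (rewrite <- Hs; nra).
  assert (p - (1-p)*c^2 < 0).
  { apply (Rmult_lt_compat_l (1-p)) in H; [|lra].
    replace ((1-p)*(p/(1-p))) with p in H by (field; lra). lra. }
  unfold Vd. assert (0 < Rpower c (2*p-3)) by apply exp_pos.
  assert (0 < 2*p*(1-p)*Rpower c (2*p-3)) by (apply Rmult_lt_0_compat; nra).
  nra.
Qed.

Lemma V_zero p a x : 0 < x -> Q p a x = 0 -> V p a x = 0.
Proof. intros Hx HQ. rewrite Q_V in HQ by exact Hx.
  assert (0 < Rpower x (2*(1-p))) by apply exp_pos. nra. Qed.

Lemma mvt_V p a x y : 0 < x -> x < y -> exists c, x <= c <= y /\ V p a y - V p a x = Vd p c * (y - x).
Proof.
  intros Hx Hxy. destruct (MVT_gen (V p a) x y (Vd p)) as [c [Hc E]].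
  - intros z Hz. rewrite Rmin_left, Rmax_right in Hz by lra. apply V_der. lra.
  - intros z Hz. rewrite Rmin_left, Rmax_right in Hz by lra. apply V_cont. lra.
  - rewrite Rmin_left, Rmax_right in Hc by lra. exists c. split; [exact Hc|exact E].
Qed.

Lemma between_k0 p a beta alpha : 0 < p < 1 -> a_star p < a ->
  0 < beta -> beta < alpha -> Q p a beta = 0 -> Q p a alpha = 0 ->
  beta < k0 p < alpha.
Proof.
  intros Hp Ha Hb Hba Qb Qa.
  assert (Vb := V_zero p a beta Hb Qb). assert (Va := V_zero p a alpha ltac:(lra) Qa).
  assert (Vk := V_k0 p a Hp).
  destruct (mvt_V p a beta alpha Hb Hba) as [c [Hc E]].
  rewrite Vb, Va in E.
  assert (Vd p c = 0) by (apply (Rmult_eq_reg_r (alpha - beta)); lra).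
  destruct (Rtotal_order c (k0 p)) as [Hlt|[Heq|Hgt]].
  - assert (Hv := Vd_pos p c Hp ltac:(lra) Hlt). lra.
  - subst c. split.
    + destruct (Rle_lt_or_eq_dec _ _ (proj1 Hc)) as [?|Eq]; auto. rewrite Eq in Vb. lra.
    + destruct (Rle_lt_or_eq_dec _ _ (proj2 Hc)) as [?|Eq]; auto. rewrite <- Eq in Va. lra.
  - assert (Hv := Vd_neg p c Hp ltac:(lra) Hgt). lra.
Qed.

Lemma Q_pos_between p a beta alpha x : 0 < p < 1 -> a_star p < a ->
  0 < beta -> beta < alpha -> Q p a beta = 0 -> Q p a alpha = 0 ->
  beta < x < alpha -> 0 < Q p a x.
Proof.
  intros Hp Ha Hb Hba Qb Qa Hx.
  destruct (between_k0 p a beta alpha Hp Ha Hb Hba Qb Qa) as [Hbk Hka].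
  assert (Vb := V_zero p a beta Hb Qb). assert (Va := V_zero p a alpha ltac:(lra) Qa).
  assert (Vk := V_k0 p a Hp).
  assert (0 < V p a x).
  { destruct (Rle_or_lt x (k0 p)) as [Hxk|Hxk].
    - destruct (mvt_V p a beta x Hb (proj1 Hx)) as [c [Hc E]].
      destruct (Rle_lt_or_eq_dec _ _ (Rle_trans _ _ _ (proj2 Hc) Hxk)) as [Hck|Hck].
      + assert (Hv := Vd_pos p c Hp ltac:(lra) Hck). rewrite Vb in E. nra.
      + assert (x = k0 p) by lra. subst x. lra.
    - destruct (mvt_V p a x alpha ltac:(lra) (proj2 Hx)) as [c [Hc E]].
      assert (Hv := Vd_neg p c Hp ltac:(lra) ltac:(lra)). rewrite Va in E. nra. }
  rewrite Q_V by lra. assert (0 < Rpower x (2*(1-p))) by apply exp_pos. nra.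
Qed.

Lemma lt_k0 p c : 0 < p < 1 -> 0 < c -> c < k0 p -> 0 < p - (1-p)*c^2.
Proof.
  intros Hp Hc Hck. assert (Hs := k0_sq p Hp). assert (Hk0 := k0_pos p Hp).
  assert (c^2 < p/(1-p)) by (rewrite <- Hs; nra).
  apply (Rmult_lt_compat_l (1-p)) in H; [|lra].
  replace ((1-p)*(p/(1-p))) with p in H by (field; lra). lra.
Qed.

Lemma gt_k0 p c : 0 < p < 1 -> 0 < c -> k0 p < c -> p - (1-p)*c^2 < 0.
Proof.
  intros Hp Hc Hck. assert (Hs := k0_sq p Hp). assert (Hk0 := k0_pos p Hp).
  assert (c^2 > p/(1-p)) by (rewrite <- Hs; nra).
  apply (Rmult_lt_compat_l (1-p)) in H; [|lra].
  replace ((1-p)*(p/(1-p))) with p in H by (field; lra). lra.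
Qed.

Lemma Qd_at_zero p a x : 0 < x -> V p a x = 0 -> Qd p a x = 2*(1-p)*p*(p-(1-p)*x^2)/x.
Proof.
  intros Hx. unfold V, Qd. rpnorm x p Hx. intros H.
  assert (Ea : a = (1-p)^2*(u*u) + p^2*(u*u)/(x*x)).
  { unfold Rdiv in *. rewrite !Rmult_1_r in H. lra. }
  subst a. fld.
Qed.

Lemma Qd_beta p a beta alpha : 0 < p < 1 -> a_star p < a ->
  0 < beta -> beta < alpha -> Q p a beta = 0 -> Q p a alpha = 0 -> 0 < Qd p a beta.
Proof.
  intros Hp Ha Hb Hba Qb Qa.
  destruct (between_k0 p a beta alpha Hp Ha Hb Hba Qb Qa) as [Hbk Hka].
  rewrite Qd_at_zero by (auto; apply V_zero; auto).
  assert (H := lt_k0 p beta Hp Hb Hbk). apply Rdiv_lt_0_compat; [|lra].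
  apply Rmult_lt_0_compat; [|lra]. apply Rmult_lt_0_compat; lra.
Qed.

Lemma Qd_alpha p a beta alpha : 0 < p < 1 -> a_star p < a ->
  0 < beta -> beta < alpha -> Q p a beta = 0 -> Q p a alpha = 0 -> Qd p a alpha < 0.
Proof.
  intros Hp Ha Hb Hba Qb Qa.
  destruct (between_k0 p a beta alpha Hp Ha Hb Hba Qb Qa) as [Hbk Hka].
  assert (Va : V p a alpha = 0) by (apply V_zero; [lra|exact Qa]).
  rewrite (Qd_at_zero p a alpha ltac:(lra) Va).
  assert (H := gt_k0 p alpha Hp ltac:(lra) Hka).
  assert (0 < 2*(1-p)*p) by (apply Rmult_lt_0_compat; lra).
  unfold Rdiv. assert (0 < / alpha) by (apply Rinv_0_lt_compat; lra).
  rewrite <- (Rmult_0_l (/alpha)). apply Rmult_lt_compat_r; [assumption|].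
  set (X := p - (1-p)*alpha^2) in *. nra.
Qed.

Ltac sidec := first [ lra | apply Rgt_not_eq, Rlt_gt; first [apply sqrt_lt_R0; nra
   | apply Rmult_lt_0_compat; [lra| apply sqrt_lt_R0; nra]] ].

Definition Sd (p a k : R) := Qd p a k / (2 * sqrt (Q p a k)).

Lemma hh_cont p a x : 0 < x -> 0 < Q p a x -> continuous (hh p a) x.
Proof. intros Hx HQ. apply (ex_derive_continuous (hh p a)).
  unfold hh, Rr, Q, Rpower. auto_derive. unfold Q, Rpower in HQ.
  assert (Hs := sqrt_lt_R0 _ HQ). repeat split; try sidec. Qed.

Lemma Ups_cont p a x : 0 < x -> 0 < Q p a x -> continuous (Upsilon_integrand p a) x.
Proof. intros Hx HQ. apply (ex_derive_continuous (Upsilon_integrand p a)).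
  unfold Upsilon_integrand, eta, Q, Rpower. auto_derive. unfold Q, Rpower in HQ.
  assert (Hs := sqrt_lt_R0 _ HQ). repeat split; try sidec. Qed.

Lemma Sd_cont p a x : 0 < x -> 0 < Q p a x -> continuous (Sd p a) x.
Proof. intros Hx HQ. apply (ex_derive_continuous (Sd p a)).
  unfold Sd, Qd, Q, Rpower. auto_derive. unfold Q, Rpower in HQ.
  assert (Hs := sqrt_lt_R0 _ HQ). assert (0 < exp (2*p * ln x)) by apply exp_pos.
  repeat split; try sidec. Qed.

Lemma S_der p a x : 0 < x -> 0 < Q p a x -> is_derive (fun k => sqrt (Q p a k)) x (Sd p a x).
Proof. intros Hx HQ. apply is_derive_sqrt; [apply Q_der, Hx | exact HQ]. Qed.

Lemma Rr_cont p x : 0 < x -> continuous (Rr p) x.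
Proof. intros Hx. apply (ex_derive_continuous (Rr p)).
  unfold Rr, Rpower. auto_derive. repeat split; lra. Qed.

Lemma Qd_cont p a x : 0 < x -> continuous (Qd p a) x.
Proof. intros Hx. apply (ex_derive_continuous (Qd p a)).
  unfold Qd, Rpower. auto_derive. assert (0 < exp (2*p * ln x)) by apply exp_pos.
  repeat split; lra. Qed.

Lemma S_cont p a x : 0 < x -> continuous (fun k => sqrt (Q p a k)) x.
Proof. intros Hx. apply continuous_sqrt_comp. apply (ex_derive_continuous (Q p a)).
  eexists. apply Q_der, Hx. Qed.

Lemma H_cont p a x : 0 < x -> continuous (Hf p a) x.
Proof. intros Hx. unfold Hf. apply (continuous_mult (Gf p)).
  - apply (ex_derive_continuous (Gf p)). eexists. apply G_der, Hx.
  - apply S_cont, Hx. Qed.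

Lemma Rr_neg p x : 0 < p < 1 -> 0 < x -> Rr p x < 0.
Proof. intros Hp Hx. unfold Rr.
  assert (0 < Rpower x (p+1)) by apply exp_pos.
  assert (0 < Rpower x (p-1)) by apply exp_pos.
  assert (0 < Rpower x (p-3)) by apply exp_pos.
  assert (0 < p^2*(1-p)^2) by (apply Rmult_lt_0_compat; apply pow_lt; lra).
  assert (0 < p*(1+p-4*p^2+2*p^3)).
  { replace (1+p-4*p^2+2*p^3) with ((1-p)*(1+2*p*(1-p))) by ring.
    apply Rmult_lt_0_compat; [lra|]. apply Rmult_lt_0_compat; nra. }
  nra. Qed.

Definition Hyp p a b al := 0 < p < 1 /\ a_star p < a /\ 0 < b /\ b < al /\ Q p a b = 0 /\ Q p a al = 0.

Lemma Qpos p a b al x : Hyp p a b al -> b < x < al -> 0 < Q p a x.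
Proof. intros (H1&H2&H3&H4&H5&H6) Hx. eapply Q_pos_between; eauto. Qed.

Lemma hh_neg p a b al x : Hyp p a b al -> b < x < al -> hh p a x < 0.
Proof. intros H Hx. assert (HQ := Qpos p a b al x H Hx). destruct H as (Hp&_&Hb&_).
  unfold hh. assert (Hs := sqrt_lt_R0 _ HQ). assert (Hr := Rr_neg p x Hp ltac:(lra)).
  unfold Rdiv. rewrite <- (Rmult_0_l (/ sqrt (Q p a x))). apply Rmult_lt_compat_r; auto.
  apply Rinv_0_lt_compat; auto. Qed.

Lemma hh_cont' p a b al x : Hyp p a b al -> b < x < al -> continuous (hh p a) x.
Proof. intros H Hx. apply hh_cont. destruct H as (_&_&?&_). lra. eapply Qpos; eauto. Qed.

Lemma ex_RInt_hh p a b al u v : Hyp p a b al -> b < u < al -> b < v < al -> ex_RInt (hh p a) u v.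
Proof. intros H Hu Hv. apply (@ex_RInt_continuous R_CompleteNormedModule). intros z Hz. apply (hh_cont' p a b al); auto.
  split. apply Rlt_le_trans with (Rmin u v); [apply Rmin_glb_lt|]; lra.
  apply Rle_lt_trans with (Rmax u v); [|apply Rmax_lub_lt]; lra. Qed.

Lemma RInt_hh_lt p a b al u v : Hyp p a b al -> b < u -> u < v -> v < al -> RInt (hh p a) u v < 0.
Proof. intros H Hu Huv Hv.
  replace 0 with (RInt (fun _ => 0) u v).
  2:{ rewrite RInt_const. unfold scal; simpl. unfold mult; simpl. ring. }
  apply RInt_lt; auto.
  - intros; apply continuous_const.
  - intros x Hx. apply (hh_cont' p a b al); auto; lra.
  - intros x Hx. apply (hh_neg p a b al); auto; lra.
Qed.

Lemma RInt_hh_le p a b al u v : Hyp p a b al -> b < u -> u <= v -> v < al -> RInt (hh p a) u v <= 0.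
Proof. intros H Hu Huv Hv. destruct (Rle_lt_or_eq_dec _ _ Huv) as [Hl|He].
  - apply Rlt_le. eapply RInt_hh_lt; eauto.
  - subst. rewrite RInt_point. right. reflexivity. Qed.

Definition Phi p a b al x := RInt (hh p a) ((b+al)/2) x.

Lemma Phi_diff p a b al u v : Hyp p a b al -> b < u < al -> b < v < al ->
  Phi p a b al v - Phi p a b al u = RInt (hh p a) u v.
Proof. intros H Hu Hv. assert (Hm : b < (b+al)/2 < al) by (destruct H as (_&_&_&?&_); lra).
  unfold Phi.
  assert (E := @RInt_Chasles R_CompleteNormedModule (hh p a) ((b+al)/2) u v
     (ex_RInt_hh p a b al _ _ H Hm Hu) (ex_RInt_hh p a b al _ _ H Hu Hv)).
  simpl in E. unfold plus in E; simpl in E. rewrite <- E. ring. Qed.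

Lemma Phi_der p a b al x : Hyp p a b al -> b < x < al -> is_derive (Phi p a b al) x (hh p a x).
Proof. intros H Hx. assert (Hm : b < (b+al)/2 < al) by (destruct H as (_&_&_&?&_); lra).
  apply (is_derive_RInt (hh p a) (Phi p a b al) ((b+al)/2) x).
  - assert (Hd : 0 < Rmin (x - b) (al - x)) by (apply Rmin_glb_lt; lra).
    exists (mkposreal _ Hd). intros y Hy. unfold Phi. apply (@RInt_correct R_CompleteNormedModule).
    apply (ex_RInt_hh p a b al); auto.
    change (Rabs (y - x) < Rmin (x - b) (al - x)) in Hy.
    assert (Rabs (y - x) < x - b) by (eapply Rlt_le_trans; [exact Hy| apply Rmin_l]).
    assert (Rabs (y - x) < al - x) by (eapply Rlt_le_trans; [exact Hy| apply Rmin_r]).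
    apply Rabs_def2 in H0. apply Rabs_def2 in H1. lra.
  - apply (hh_cont' p a b al); auto. Qed.

Lemma cont_ed f x : continuous f x -> forall eps : posreal, exists d : posreal,
  forall y, Rabs (y - x) < d -> Rabs (f y - f x) < eps.
Proof. intros Hc eps. destruct (Hc _ (locally_ball (f x) eps)) as [d Hd].
  exists d. intros y Hy. apply Hd. exact Hy. Qed.

Lemma cauchy_piece p a b al T dT eps u v : Hyp p a b al -> b < u -> u <= v -> v < al ->
  (forall x, u <= x <= v -> is_derive T x (dT x)) ->
  (forall x, u <= x <= v -> continuous dT x) ->
  (forall x, u < x < v -> dT x <= hh p a x) ->
  Rabs (T u) < eps/2 -> Rabs (T v) < eps/2 -> Rabs (RInt (hh p a) u v) < eps.
Proof.
  intros H Hu Huv Hv HD HC Hle HTu HTv.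
  assert (Hneg := RInt_hh_le p a b al u v H Hu Huv Hv).
  assert (Hge : RInt dT u v <= RInt (hh p a) u v).
  { apply RInt_le; auto.
    - apply (@ex_RInt_continuous R_CompleteNormedModule). intros z Hz. rewrite Rmin_left, Rmax_right in Hz by lra. auto.
    - apply (ex_RInt_hh p a b al); [exact H|lra|lra]. }
  assert (E : RInt dT u v = T v - T u).
  { apply is_RInt_unique. apply (is_RInt_derive T dT u v).
    - intros z Hz. rewrite Rmin_left, Rmax_right in Hz by lra. auto.
    - intros z Hz. rewrite Rmin_left, Rmax_right in Hz by lra. auto. }
  rewrite E in Hge. apply Rabs_def2 in HTu. apply Rabs_def2 in HTv.
  rewrite Rabs_left1 by lra. lra.
Qed.

Lemma dT_le p a x K : 0 < Q p a x -> - Rr p x - K * Qd p a x / 2 <= 0 ->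
  -K * Sd p a x <= hh p a x.
Proof. intros HQ Hphi. unfold Sd, hh. assert (Hs := sqrt_lt_R0 _ HQ).
  set (s := sqrt (Q p a x)) in *.
  replace (-K * (Qd p a x / (2*s))) with ((-K * Qd p a x / 2) * / s) by (field; lra).
  unfold Rdiv at 2. apply Rmult_le_compat_r. left; apply Rinv_0_lt_compat; lra. lra. Qed.

Lemma dT_le' p a x K : 0 < Q p a x -> - Rr p x + K * Qd p a x / 2 <= 0 ->
  K * Sd p a x <= hh p a x.
Proof. intros HQ Hphi. unfold Sd, hh. assert (Hs := sqrt_lt_R0 _ HQ).
  set (s := sqrt (Q p a x)) in *.
  replace (K * (Qd p a x / (2*s))) with ((K * Qd p a x / 2) * / s) by (field; lra).
  unfold Rdiv at 2. apply Rmult_le_compat_r. left; apply Rinv_0_lt_compat; lra. lra. Qed.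

Lemma phi_cont p a K x : 0 < x -> continuous (fun x => - Rr p x - K * Qd p a x / 2) x.
Proof. intros Hx. apply (ex_derive_continuous (fun x => - Rr p x - K * Qd p a x / 2)).
  unfold Rr, Qd, Rpower. auto_derive. assert (0 < exp (2*p * ln x)) by apply exp_pos.
  repeat split; lra. Qed.

Lemma phi_cont' p a K x : 0 < x -> continuous (fun x => - Rr p x + K * Qd p a x / 2) x.
Proof. intros Hx. apply (ex_derive_continuous (fun x => - Rr p x + K * Qd p a x / 2)).
  unfold Rr, Qd, Rpower. auto_derive. assert (0 < exp (2*p * ln x)) by apply exp_pos.
  repeat split; lra. Qed.

Lemma lim_beta p a b al : Hyp p a b al -> exists l, filterlim (Phi p a b al) (at_right b) (locally l).
Proof.
  intros H. pose proof H as (Hp&Ha&Hb&Hba&Qb&Qa).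
  assert (Qdb := Qd_beta p a b al Hp Ha Hb Hba Qb Qa).
  set (K := 2*(Rabs (Rr p b)+1)/Qd p a b).
  assert (HK : 0 < K) by (unfold K; apply Rdiv_lt_0_compat; [|lra];
     assert (0 <= Rabs (Rr p b)) by apply Rabs_pos; lra).
  destruct (cont_ed _ b (phi_cont p a K b Hb) (mkposreal 1 Rlt_0_1)) as [d1 Hd1].
  assert (Hphib : - Rr p b - K * Qd p a b / 2 <= -1).
  { replace (K * Qd p a b / 2) with (Rabs (Rr p b) + 1) by (unfold K; field; lra).
    assert (- Rr p b <= Rabs (Rr p b)) by (rewrite <- Rabs_Ropp; apply RRle_abs). lra. }
  apply (proj1 (@filterlim_locally_cauchy R R_CompleteSpace (at_right b) (at_right_proper_filter b) (Phi p a b al))).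
  intros eps.
  assert (He : 0 < eps/(2*K)) by (apply Rdiv_lt_0_compat; [apply cond_pos|lra]).
  destruct (cont_ed _ b (S_cont p a b Hb) (mkposreal _ He)) as [d2 Hd2].
  simpl in Hd1, Hd2. rewrite Qb, sqrt_0 in Hd2.
  assert (Hd : 0 < Rmin (Rmin d1 d2) (al - b)) by
    (repeat apply Rmin_glb_lt; try apply cond_pos; lra).
  set (d := Rmin (Rmin d1 d2) (al - b)) in *.
  assert (Hdd1 : d <= d1) by (unfold d; eapply Rle_trans; [apply Rmin_l|apply Rmin_l]).
  assert (Hdd2 : d <= d2) by (unfold d; eapply Rle_trans; [apply Rmin_l|apply Rmin_r]).
  assert (Hdd3 : d <= al - b) by (unfold d; apply Rmin_r).
  assert (Key : forall u v, b < u < b + d -> b < v < b + d -> u <= v ->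
     Rabs (RInt (hh p a) u v) < eps).
  { intros u v Hu Hv Huv.
    apply (cauchy_piece p a b al (fun x => -K * sqrt (Q p a x)) (fun x => -K * Sd p a x));
      try lra; auto.
    - intros x Hx. apply is_derive_scal. apply S_der. lra. apply (Qpos p a b al); auto; lra.
    - intros x Hx. apply (continuous_mult (fun _ => -K) (Sd p a)). apply continuous_const.
      apply Sd_cont. lra. apply (Qpos p a b al); auto; lra.
    - intros x Hx. apply dT_le. apply (Qpos p a b al); auto; lra.
      assert (Rabs (x - b) < d1) by (rewrite Rabs_right; lra).
      specialize (Hd1 x H0). apply Rabs_def2 in Hd1. lra.
    - rewrite Rabs_mult, Rabs_Ropp, (Rabs_right K) by lra.
      assert (Rabs (u - b) < d2) by (rewrite Rabs_right; lra).
      specialize (Hd2 u H0). rewrite Rminus_0_r in Hd2.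
      apply (Rmult_lt_compat_l K) in Hd2; [|lra].
      replace (K * (eps / (2*K))) with (eps/2) in Hd2 by (field; lra). exact Hd2.
    - rewrite Rabs_mult, Rabs_Ropp, (Rabs_right K) by lra.
      assert (Rabs (v - b) < d2) by (rewrite Rabs_right; lra).
      specialize (Hd2 v H0). rewrite Rminus_0_r in Hd2.
      apply (Rmult_lt_compat_l K) in Hd2; [|lra].
      replace (K * (eps / (2*K))) with (eps/2) in Hd2 by (field; lra). exact Hd2. }
  exists (fun x => b < x < b + d). split.
  - exists (mkposreal d Hd). intros y Hy Hby. change (Rabs (y - b) < d) in Hy.
    apply Rabs_def2 in Hy. lra.
  - intros u v Hu Hv. change (Rabs (Phi p a b al v - Phi p a b al u) < eps).
    rewrite (Phi_diff p a b al u v H) by lra.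
    destruct (Rle_or_lt u v) as [Huv|Hvu].
    + apply Key; auto.
    + rewrite <- (Rabs_Ropp).
      replace (- RInt (hh p a) u v) with (RInt (hh p a) v u).
      * apply Key; auto; lra.
      * assert (E1 := Phi_diff p a b al u v H ltac:(lra) ltac:(lra)).
        assert (E2 := Phi_diff p a b al v u H ltac:(lra) ltac:(lra)). lra.
Qed.

Lemma lim_alpha p a b al : Hyp p a b al -> exists l, filterlim (Phi p a b al) (at_left al) (locally l).
Proof.
  intros H. pose proof H as (Hp&Ha&Hb&Hba&Qb&Qa).
  assert (Qda := Qd_alpha p a b al Hp Ha Hb Hba Qb Qa).
  set (K := 2*(Rabs (Rr p al)+1)/(- Qd p a al)).
  assert (HK : 0 < K) by (unfold K; apply Rdiv_lt_0_compat; [|lra];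
     assert (0 <= Rabs (Rr p al)) by apply Rabs_pos; lra).
  destruct (cont_ed _ al (phi_cont' p a K al ltac:(lra)) (mkposreal 1 Rlt_0_1)) as [d1 Hd1].
  assert (Hphib : - Rr p al + K * Qd p a al / 2 <= -1).
  { replace (K * Qd p a al / 2) with (- (Rabs (Rr p al) + 1)) by (unfold K; field; lra).
    assert (- Rr p al <= Rabs (Rr p al)) by (rewrite <- Rabs_Ropp; apply RRle_abs). lra. }
  apply (proj1 (@filterlim_locally_cauchy R R_CompleteSpace (at_left al) (at_left_proper_filter al) (Phi p a b al))).
  intros eps.
  assert (He : 0 < eps/(2*K)) by (apply Rdiv_lt_0_compat; [apply cond_pos|lra]).
  destruct (cont_ed _ al (S_cont p a al ltac:(lra)) (mkposreal _ He)) as [d2 Hd2].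
  simpl in Hd1, Hd2. rewrite Qa, sqrt_0 in Hd2.
  assert (Hd : 0 < Rmin (Rmin d1 d2) (al - b)) by
    (repeat apply Rmin_glb_lt; try apply cond_pos; lra).
  set (d := Rmin (Rmin d1 d2) (al - b)) in *.
  assert (Hdd1 : d <= d1) by (unfold d; eapply Rle_trans; [apply Rmin_l|apply Rmin_l]).
  assert (Hdd2 : d <= d2) by (unfold d; eapply Rle_trans; [apply Rmin_l|apply Rmin_r]).
  assert (Hdd3 : d <= al - b) by (unfold d; apply Rmin_r).
  assert (Key : forall u v, al - d < u < al -> al - d < v < al -> u <= v ->
     Rabs (RInt (hh p a) u v) < eps).
  { intros u v Hu Hv Huv.
    apply (cauchy_piece p a b al (fun x => K * sqrt (Q p a x)) (fun x => K * Sd p a x));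
      try lra; auto.
    - intros x Hx. apply is_derive_scal. apply S_der. lra. apply (Qpos p a b al); auto; lra.
    - intros x Hx. apply (continuous_mult (fun _ => K) (Sd p a)). apply continuous_const.
      apply Sd_cont. lra. apply (Qpos p a b al); auto; lra.
    - intros x Hx. apply dT_le'. apply (Qpos p a b al); auto; lra.
      assert (Rabs (x - al) < d1) by (rewrite Rabs_left; lra).
      specialize (Hd1 x H0). apply Rabs_def2 in Hd1. lra.
    - rewrite Rabs_mult, (Rabs_right K) by lra.
      assert (Rabs (u - al) < d2) by (rewrite Rabs_left; lra).
      specialize (Hd2 u H0). rewrite Rminus_0_r in Hd2.
      apply (Rmult_lt_compat_l K) in Hd2; [|lra].
      replace (K * (eps / (2*K))) with (eps/2) in Hd2 by (field; lra). exact Hd2.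
    - rewrite Rabs_mult, (Rabs_right K) by lra.
      assert (Rabs (v - al) < d2) by (rewrite Rabs_left; lra).
      specialize (Hd2 v H0). rewrite Rminus_0_r in Hd2.
      apply (Rmult_lt_compat_l K) in Hd2; [|lra].
      replace (K * (eps / (2*K))) with (eps/2) in Hd2 by (field; lra). exact Hd2. }
  exists (fun x => al - d < x < al). split.
  - exists (mkposreal d Hd). intros y Hy Hby. change (Rabs (y - al) < d) in Hy.
    apply Rabs_def2 in Hy. lra.
  - intros u v Hu Hv. change (Rabs (Phi p a b al v - Phi p a b al u) < eps).
    rewrite (Phi_diff p a b al u v H) by lra.
    destruct (Rle_or_lt u v) as [Huv|Hvu].
    + apply Key; auto.
    + rewrite <- (Rabs_Ropp).
      replace (- RInt (hh p a) u v) with (RInt (hh p a) v u).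
      * apply Key; auto; lra.
      * assert (E1 := Phi_diff p a b al u v H ltac:(lra) ltac:(lra)).
        assert (E2 := Phi_diff p a b al v u H ltac:(lra) ltac:(lra)). lra.
Qed.

Definition Psi p a b al x := 2 * Hf p a x + Phi p a b al x.

Lemma Psi_der p a b al x : Hyp p a b al -> b < x < al ->
  is_derive (Psi p a b al) x (Upsilon_integrand p a x).
Proof. intros H Hx.
  assert (HQ := Qpos p a b al x H Hx). pose proof H as (_&_&Hb&_).
  assert (D := is_derive_plus _ _ x _ _
    (is_derive_scal _ x 2 _ (H_der p a x ltac:(lra) HQ)) (Phi_der p a b al x H Hx)).
  replace (Upsilon_integrand p a x) with
    (plus (2 * ((Upsilon_integrand p a x - hh p a x) / 2)) (hh p a x))
    by (unfold plus; simpl; field).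
  exact D. Qed.

Lemma lim_comb (F : (R -> Prop) -> Prop) {FF : Filter F} f g l1 l2 :
  filterlim f F (locally l1) -> filterlim g F (locally l2) ->
  filterlim (fun x => 2 * f x + g x) F (locally (2 * l1 + l2)).
Proof. intros H1 H2.
  assert (H3 : filterlim (fun x => 2 * f x) F (locally (2 * l1))).
  { apply (filterlim_comp _ _ _ f (fun z => 2 * z) F (locally l1)); auto.
    apply (filterlim_scal_r (K := R_AbsRing) (V := R_NormedModule) 2 l1). }
  apply (filterlim_comp_2 (fun x => 2 * f x) g Rplus H3 H2).
  apply (filterlim_plus (K := R_AbsRing) (V := R_NormedModule) (2*l1) l2).
Qed.

Lemma H_lim p a x F : 0 < x -> Q p a x = 0 -> filter_le F (locally x) -> filterlim (Hf p a) F (locally 0).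
Proof. intros Hx HQ HF. assert (E : Hf p a x = 0) by (unfold Hf; rewrite HQ, sqrt_0; ring).
  rewrite <- E. eapply filterlim_filter_le_1. exact HF. apply H_cont, Hx. Qed.

Lemma at_right_int b c : b < c -> at_right b (fun x => b < x < c).
Proof. intros Hbc. assert (Hd : 0 < c - b) by lra. exists (mkposreal _ Hd).
  intros y Hy Hby. change (Rabs (y - b) < c - b) in Hy. apply Rabs_def2 in Hy. lra. Qed.

Lemma at_left_int c al : c < al -> at_left al (fun x => c < x < al).
Proof. intros Hbc. assert (Hd : 0 < al - c) by lra. exists (mkposreal _ Hd).
  intros y Hy Hby. change (Rabs (y - al) < al - c) in Hy. apply Rabs_def2 in Hy. lra. Qed.

Theorem mainTheorem12 (p a beta alpha : R) :
  0 < p < 1 -> a_star p < a ->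
  0 < beta -> beta < alpha -> Q p a beta = 0 -> Q p a alpha = 0 ->
  exists v : R,
    is_RInt_gen (Upsilon_integrand p a) (at_right beta) (at_left alpha) v
    /\ v < 0.
Proof.
  intros Hp Ha Hb Hba Qb Qa.
  assert (H : Hyp p a beta alpha) by (repeat split; auto; lra).
  destruct (lim_beta p a beta alpha H) as [la Hla].
  destruct (lim_alpha p a beta alpha H) as [lb Hlb].
  set (c := (beta + alpha)/2).
  assert (HPa : filterlim (Psi p a beta alpha) (at_right beta) (locally (2*0 + la))).
  { apply (lim_comb (at_right beta)); [|exact Hla]. apply H_lim with beta; auto. apply filter_le_within. }
  assert (HPb : filterlim (Psi p a beta alpha) (at_left alpha) (locally (2*0 + lb))).
  { apply (lim_comb (at_left alpha)); [|exact Hlb]. apply H_lim with alpha; auto; try lra. apply filter_le_within. }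
  assert (Hin : filter_prod (at_right beta) (at_left alpha)
     (fun ab => forall x, Rmin (fst ab) (snd ab) <= x <= Rmax (fst ab) (snd ab) -> beta < x < alpha)).
  { apply (Filter_prod _ _ _ (fun x => beta < x < c) (fun y => c < y < alpha)).
    apply at_right_int; unfold c; lra. apply at_left_int; unfold c; lra.
    intros x y Hx Hy z Hz. simpl in Hz. rewrite Rmin_left, Rmax_right in Hz by lra. lra. }
  assert (HD : forall z, beta < z < alpha -> Derive (Psi p a beta alpha) z = Upsilon_integrand p a z).
  { intros z Hz. apply is_derive_unique. apply Psi_der; auto. }
  assert (HI := is_RInt_gen_Derive (Fa := at_right beta) (Fb := at_left alpha)
     (Psi p a beta alpha) (2*0+la) (2*0+lb)).
  exists ((2*0+lb) - (2*0+la)). split.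
  - apply (is_RInt_gen_ext (Derive (Psi p a beta alpha))).
    + eapply filter_imp; [|exact Hin]. intros [x y] Hxy z Hz. apply HD. apply Hxy.
      simpl in *. lra.
    + apply HI; auto.
      * eapply filter_imp; [|exact Hin]. intros [x y] Hxy z Hz. eexists. apply Psi_der; auto.
      * eapply filter_imp; [|exact Hin]. intros [x y] Hxy z Hz.
        specialize (Hxy z Hz). simpl in Hxy.
        apply (continuous_ext_loc _ (Upsilon_integrand p a)).
        -- assert (Hd : 0 < Rmin (z - beta) (alpha - z)) by (apply Rmin_glb_lt; lra).
           exists (mkposreal _ Hd). intros w Hw. change (Rabs (w - z) < Rmin (z - beta) (alpha - z)) in Hw.
           assert (Rabs (w - z) < z - beta) by (eapply Rlt_le_trans; [exact Hw| apply Rmin_l]).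
           assert (Rabs (w - z) < alpha - z) by (eapply Rlt_le_trans; [exact Hw| apply Rmin_r]).
           apply Rabs_def2 in H0. apply Rabs_def2 in H1. symmetry. apply HD. lra.
        -- apply Ups_cont. lra. apply (Qpos p a beta alpha); auto.
  - set (x1 := (beta + c)/2). set (x2 := (c + alpha)/2).
    assert (Hx : beta < x1 /\ x1 < x2 /\ x2 < alpha) by (unfold x1, x2, c; lra).
    assert (L1 : Phi p a beta alpha x1 <= la).
    { assert (R := filterlim_le (F := at_right beta) (fun _ => Phi p a beta alpha x1)
         (Phi p a beta alpha) (Phi p a beta alpha x1) la).
      simpl in R. apply R.
      - eapply filter_imp; [|apply (at_right_int beta x1); lra]. intros x Hx'.
        assert (E := Phi_diff p a beta alpha x x1 H ltac:(lra) ltac:(lra)).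
        assert (Hn := RInt_hh_le p a beta alpha x x1 H ltac:(lra) ltac:(lra) ltac:(lra)). lra.
      - apply filterlim_const.
      - exact Hla. }
    assert (L2 : lb <= Phi p a beta alpha x2).
    { assert (R := filterlim_le (F := at_left alpha) (Phi p a beta alpha)
         (fun _ => Phi p a beta alpha x2) lb (Phi p a beta alpha x2)).
      simpl in R. apply R.
      - eapply filter_imp; [|apply (at_left_int x2 alpha); lra]. intros x Hx'.
        assert (E := Phi_diff p a beta alpha x2 x H ltac:(lra) ltac:(lra)).
        assert (Hn := RInt_hh_le p a beta alpha x2 x H ltac:(lra) ltac:(lra) ltac:(lra)). lra.
      - exact Hlb.
      - apply filterlim_const. }
    assert (E := Phi_diff p a beta alpha x1 x2 H ltac:(lra) ltac:(lra)).
    assert (Hn := RInt_hh_lt p a beta alpha x1 x2 H ltac:(lra) ltac:(lra) ltac:(lra)).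
    lra.
Qed.
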